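(* Let $\sigma>0$, $\eta>0$, $\hat\alpha>0$, $h>0$, $r\ge0$, $a\in\mathbb{R}$, and for $\beta\ge0$ let $v_\beta$ denote the unique $C^1[0,\infty)$ solution of $\frac{\sigma^2}2v'(y)=\beta+\frac{\hat\alpha}4v(y)^2+\eta y(v(y)-\frac h\eta)-av(y)$, $y\ge0$, $v(0)=-r$. Let $\underline\beta_2=-ar-\frac{\hat\alpha r^2}4$. If either $a>-\frac{\hat\alpha}4r$ and $\beta\in\mathcal D_1$, or $a\le-\frac{\hat\alpha}4r$ and $\beta\in\mathcal D_2$, then $\lim_{x\to\infty}v_\beta(x)=-\infty$.
   Context: $\mathcal D_1=\{\beta\ge0:\exists x_\beta\ge0$ such that $v_\beta$ is nondecreasing on $(0,x_\beta)$ and decreasing on $(x_\beta,\infty)\}$ and $\mathcal D_2=\{\beta>\underline\beta_2:\exists x_\beta\ge0$ such that $v_\beta$ is nondecreasing on $(0,x_\beta)$ and decreasing on $(x_\beta,\infty)\}$. *)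

(* Defs.v *)
From HB Require Import structures.
From mathcomp Require Import all_boot all_order all_algebra.
From mathcomp Require Import all_classical all_reals all_analysis.
Set Implicit Arguments. Unset Strict Implicit. Unset Printing Implicit Defensive.
Import Order.TTheory GRing.Theory Num.Theory numFieldNormedType.Exports.
Local Open Scope classical_set_scope.
Local Open Scope ring_scope.

(* v is a C^1[0,oo) solution of
   sigma^2/2 v'(y) = beta + alpha/4 v(y)^2 + eta y (v(y) - h/eta) - a v(y),  y >= 0,
   with v(0) = -r.  C^1 on [0,oo) is expressed as: v continuous on [0,oo)
   (one-sided at 0), differentiable on (0,oo) with the ODE there; continuity of
   v' up to 0 (and the right derivative at 0) then follows from the ODE. *)
Definition riccati_sol (R : realType) (sigma eta alpha h r a beta : R)
    (v : R -> R) : Prop :=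
  [/\ {within [set y : R | 0 <= y], continuous v},
      (forall y : R, 0 < y -> derivable v y 1),
      (forall y : R, 0 < y ->
         sigma ^+ 2 / 2 * derive1 v y =
         beta + alpha / 4 * v y ^+ 2 + eta * y * (v y - h / eta) - a * v y)
    & v 0 = - r].

Definition incr_then_decr (R : realType) (v : R -> R) : Prop :=
  exists x : R, 0 <= x /\
    (forall s t : R, 0 < s -> s <= t -> t < x -> v s <= v t) /\
    (forall s t : R, x < s -> s < t -> v t < v s).

Definition beta2_low (R : realType) (alpha r a : R) : R :=
  - a * r - alpha * r ^+ 2 / 4.

(* Main.v *)
Require Import Defs.
From HB Require Import structures.
From mathcomp Require Import all_boot all_order all_algebra.
From mathcomp Require Import all_classical all_reals all_analysis.
From mathcomp Require Import lra.
Import Order.TTheory GRing.Theory Num.Theory numFieldNormedType.Exports.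
Local Open Scope classical_set_scope.
Local Open Scope ring_scope.

Lemma quot_eps (R : realType) (f : R -> R) (x : R) :
  derivable f x 1 -> forall e : R, 0 < e -> exists2 d : R, 0 < d &
   forall k : R, 0 < `|k| < d -> `|derive1 f x - (f (x + k) - f x) / k| < e.
Proof.
move=> Hd e e0.
have Hc : (fun h : R => h^-1 *: ((f \o shift x) (h *: 1) - f x)) @ 0^' --> 'D_1 f x := Hd.
move/cvgrPdist_lt : Hc => /(_ e e0).
move=> /nbhs_ballP [d d0 Hb]; exists d => // k /andP [k0 kd].
rewrite derive1E.
have := Hb k.
rewrite /ball /= sub0r normrN => /(_ kd).
have kn0 : k != 0 by rewrite -normr_gt0.
move=> /(_ kn0).
by rewrite /shift /= -[k%:A]/(k * 1) mulr1 [k + x]addrC -[k^-1 *: _]/(k^-1 * _) [k^-1 * _]mulrC.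
Qed.

Lemma within_eps (R : realType) (f : R -> R) (x : R) :
  {within [set y : R | 0 <= y], continuous f} -> 0 <= x ->
  forall e : R, 0 < e -> exists2 d : R, 0 < d &
   forall y : R, 0 <= y -> `|y - x| < d -> `|f y - f x| < e.
Proof.
move=> Hc x0 e e0.
have := Hc x.
move/cvgrPdist_lt => /(_ e e0).
rewrite /prop_near1 /nbhs /= -nbhs_subspace_in //.
move=> /nbhs_ballP [d d0 Hb]; exists d => // y y0 yd.
have := Hb y.
rewrite /ball /= distrC => /(_ yd y0).
by rewrite distrC.
Qed.

Lemma right_sign (R : realType) (f : R -> R) (x d : R) :
  derivable f x 1 -> 0 < d -> (forall k, 0 < k < d -> f x <= f (x + k)) ->
  0 <= derive1 f x.
Proof.
move=> Hd d0 Hk.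
rewrite leNgt; apply/negP => D0.
have ND : 0 < - derive1 f x by rewrite oppr_gt0.
have [d' d'0 Hq] := @quot_eps _ f x Hd _ ND.
set k := Num.min d d' / 2.
have md : 0 < Num.min d d' by rewrite lt_min d0 d'0.
have k0 : 0 < k by rewrite divr_gt0.
have kd : k < Num.min d d' by rewrite /k ltr_pdivrMr // ltr_pMr // ltr1n.
have [kd1 kd2] : k < d /\ k < d' by move: kd; rewrite lt_min => /andP[].
have := Hq k.
rewrite gtr0_norm // k0 kd2 /=.
have : f x <= f (x + k) by apply: Hk; rewrite k0 kd1.
move=> H1 H2.
have q0 : 0 <= (f (x + k) - f x) / k by rewrite divr_ge0 // ?subr_ge0 // ltW.
have := H2 isT.
move: q0 D0; set q := (_ / k); set D := derive1 f x.
move=> q0 D0 /ltr_normlP [h1 h2].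
lra.
Qed.

Lemma sq_bound (R : realType) (B c x : R) : B <= x -> x <= c -> x ^+ 2 <= B ^+ 2 + c ^+ 2.
Proof.
move=> h1 h2; have [x0|x0] := lerP 0 x; nra.
Qed.

Lemma core (R : realType) (sigma eta alpha h r a beta : R) (v : R -> R) :
  0 < sigma -> 0 < eta -> 0 < alpha -> 0 < h -> 0 <= r ->
  riccati_sol sigma eta alpha h r a beta v -> incr_then_decr v ->
  v x @[x --> +oo%R] --> -oo%R.
Proof.
move=> sg0 et0 al0 h0 r0 [Hc Hder Hode0 H0] [x0 [x00 [_ Hdec]]].
have L0 : 0 < h / eta by rewrite divr_gt0.
have s0 : 0 < sigma ^+ 2 / 2 by rewrite divr_gt0 // exprn_gt0.
move: (sigma ^+ 2 / 2) (h / eta) s0 L0 Hode0 => s L s0 L0 Hode.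
have Hneg : forall y, x0 < y -> derive1 v y <= 0.
  move=> y xy.
  apply: (@decr_derive1_le0_itvy _ v false x0 y).
  - move=> z; rewrite inE /= in_itv /= andbT => hz; apply: Hder; exact: le_lt_trans hz.
  - by move=> p q; rewrite !in_itv /= !andbT => hp hq pq; exact: Hdec.
  - by rewrite in_itv /= andbT.
have HG : forall y, x0 < y ->
    beta + alpha / 4 * v y ^+ 2 + eta * y * (v y - L) - a * v y <= 0.
  move=> y xy; rewrite -Hode; last exact: le_lt_trans xy.
  by apply: mulr_ge0_le0; [exact: ltW | exact: Hneg].
have [unb|bnd] := pselect (forall M : R, exists y, x0 < y /\ v y < M).
  apply/cvgrNyPlt => M.
  have [y [xy vy]] := unb M.
  exists y; split; first exact: num_real.
  move=> z yz; apply: lt_trans vy; apply: Hdec => //.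
exfalso.
have [B HB] : exists B, forall y, x0 < y -> B <= v y.
  move/existsNP: bnd => [M HM]; exists M => y xy.
  rewrite leNgt; apply/negP => vy; apply: HM; exists y; split => //.
have HL : forall y, x0 < y -> L <= v y.
  move=> y0 xy0; rewrite leNgt; apply/negP => vlt.
  have dl0 : 0 < L - v y0 by rewrite subr_gt0.
  pose K := beta + (alpha / 4 + 1 / 2) * (B ^+ 2 + v y0 ^+ 2) + a ^+ 2 / 2.
  pose Y := Num.max y0 ((K + s) / (eta * (L - v y0))).
  have y0Y : y0 <= Y by rewrite le_max lexx.
  have KY : (K + s) / (eta * (L - v y0)) <= Y by rewrite le_max lexx orbT.
  have xY : x0 < Y := lt_le_trans xy0 y0Y.
  have Dle : forall z, Y < z -> derive1 v z <= -1.
    move=> z Yz.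
    have xz : x0 < z := lt_trans xY Yz.
    have z0 : 0 < z := le_lt_trans x00 xz.
    have hb1 := HB z xz.
    have hb2 : v z <= v y0 by apply/ltW/Hdec => //; exact: le_lt_trans y0Y Yz.
    have hsq := @sq_bound R _ _ _ hb1 hb2.
    have hz : K + s <= z * (eta * (L - v y0)).
      rewrite -ler_pdivrMr; last by rewrite mulr_gt0.
      exact: le_trans KY (ltW Yz).
    have E := Hode z z0.
    have t1 : alpha / 4 * v z ^+ 2 <= alpha / 4 * (B ^+ 2 + v y0 ^+ 2).
      by rewrite ler_wpM2l // divr_ge0 // ltW.
    have t2 : - (a * v z) <= (a ^+ 2 + v z ^+ 2) / 2.
      have := sqr_ge0 (a + v z); rewrite sqrrD; lra.
    have t3 : eta * z * (v z - L) <= eta * z * (v y0 - L).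
      by rewrite ler_wpM2l ?lerD2r // mulr_ge0 // ltW.
    have t4 : s * derive1 v z <= - s.
      rewrite E; move: hz; rewrite /K; nra.
    by rewrite -(ler_pM2l s0) mulrN1.
  pose n := v Y - B + 1.
  have n0 : 0 < n by have := HB Y xY; rewrite /n; lra.
  have Yn : Y < Y + n by lra.
  have Hd1 : forall z, z \in `]Y, Y + n[ -> is_derive z 1 v (derive1 v z).
    move=> z; rewrite in_itv /= => /andP [Yz _]; rewrite derive1E; apply: derivableP.
    apply: Hder; apply: le_lt_trans x00 (lt_trans xY Yz).
  have Hc1 : {within `[Y, Y + n], continuous v}.
    apply: (continuous_subspaceW _ Hc) => z /=; rewrite in_itv /= => /andP [Yz _].
    exact: le_trans x00 (le_trans (ltW xY) Yz).
  have [z zI Hz] := @MVT R v (derive1 v) Y (Y + n) Yn Hd1 Hc1.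
  move: zI; rewrite in_itv /= => /andP [Yz _].
  have Dz := Dle z Yz.
  have hB := HB (Y + n) (lt_trans xY Yn).
  have e : Y + n - Y = n by lra.
  rewrite e in Hz.
  have : derive1 v z * n <= -1 * n by rewrite ler_wpM2r // ltW.
  rewrite /n in Hz *; nra.
have Hgt : forall y, x0 < y -> L < v y.
  move=> y xy; apply: le_lt_trans (HL (y + 1) _) (Hdec _ _ xy _); lra.
have gL0 : beta + alpha / 4 * L ^+ 2 - a * L < 0.
  pose ys := x0 + 1 + `|alpha * L / 2 - a| / eta.
  have Pn : 0 <= `|alpha * L / 2 - a| / eta by rewrite divr_ge0 // ltW.
  have xys : x0 < ys by rewrite /ys; lra.
  have eys : eta * ys = eta * (x0 + 1) + `|alpha * L / 2 - a|.
    by rewrite /ys mulrDr [eta * (_ / eta)]mulrC divfK // gt_eqF.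
  have Pp : 0 < alpha * L / 2 - a + eta * ys.
    rewrite eys; have := ler_norm (- (alpha * L / 2 - a)); rewrite normrN.
    have : 0 < eta * (x0 + 1) by rewrite mulr_gt0 //; lra.
    lra.
  have w0 : 0 < v ys - L by rewrite subr_gt0; exact: Hgt.
  have hw := mulr_gt0 w0 Pp.
  have hw2 : 0 <= alpha / 4 * (v ys - L) ^+ 2 by rewrite mulr_ge0 ?sqr_ge0 // divr_ge0 // ltW.
  have := HG ys xys.
  move: hw hw2 Pp w0 eys; move: (v ys) (eta * ys) => V Q; nra.
pose t := x0 + 1.
have xt : x0 < t by rewrite /t; lra.
have Lt := Hgt t xt.
have t0 : 0 <= t by rewrite /t; lra.
pose S := [set y : R | 0 <= y /\ y <= t /\ v y <= L].
have S0 : S 0 by split; [exact: lexx | split => //; rewrite H0; lra].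
have hS : has_sup S by split; [exists 0 | exists t => y [_ [yt _]]].
pose y1 := sup S.
have y1ge0 : 0 <= y1 := sup_upper_bound hS S0.
have y1let : y1 <= t by apply: ge_sup; [exists 0 | move=> y [_ [yt _]]].
have c1 : v y1 <= L.
  rewrite leNgt; apply/negP => Lv.
  have e0 : 0 < v y1 - L by rewrite subr_gt0.
  have [d d0 Hd] := @within_eps R v y1 Hc y1ge0 _ e0.
  have [z Sz zd] := sup_adherent d0 hS.
  have zy1 : z <= y1 := sup_upper_bound hS Sz.
  case: Sz => z0 [_ vz].
  have : `|z - y1| < d by rewrite ltr_norml; apply/andP; split; rewrite -/y1 in zd; lra.
  move/(Hd z z0); rewrite ltr_norml => /andP [hh _]; lra.
have y1t : y1 < t.
  rewrite lt_neqAle y1let andbT; apply/eqP => e; move: c1; rewrite e; lra.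
have c2 : L <= v y1.
  rewrite leNgt; apply/negP => vL.
  have e0 : 0 < L - v y1 by rewrite subr_gt0.
  have [d d0 Hd] := @within_eps R v y1 Hc y1ge0 _ e0.
  pose z := Num.min (y1 + d / 2) t.
  have z1 : y1 < z by rewrite /z lt_min; apply/andP; split; lra.
  have z2 : z <= t by rewrite /z ge_min lexx orbT.
  have z3 : z <= y1 + d / 2 by rewrite /z ge_min lexx.
  have Sz : S z.
    split; first lra.
    split => //.
    have : `|z - y1| < d by rewrite ltr_norml; apply/andP; split; lra.
    move/(Hd z (_ : 0 <= z)) => H.
    have : `|v z - v y1| < L - v y1 by apply: H; lra.
    rewrite ltr_norml => /andP [_ hh]; lra.
  have := sup_upper_bound hS Sz; rewrite -/y1; lra.
have vy1 : v y1 = L by apply/eqP; rewrite eq_le c1 c2.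
have y10 : 0 < y1.
  rewrite lt_neqAle y1ge0 andbT; apply/eqP => e.
  move: vy1; rewrite -e H0; lra.
have D0 : 0 <= derive1 v y1.
  apply: (@right_sign R v y1 (t - y1)); [exact: Hder | lra | ].
  move=> k /andP [k0 kd]; rewrite vy1 leNgt; apply/negP => vk.
  have Sk : S (y1 + k) by split; [lra | split; [lra | exact: ltW]].
  have := sup_upper_bound hS Sk; rewrite -/y1; lra.
have := Hode y1 y10; rewrite vy1 subrr mulr0 addr0 => E.
have := mulr_ge0 (ltW s0) D0; rewrite E; lra.
Qed.
Theorem lemma13 (R : realType) (sigma eta alpha h r a beta : R) (v : R -> R) :
  0 < sigma -> 0 < eta -> 0 < alpha -> 0 < h -> 0 <= r -> 0 <= beta ->
  riccati_sol sigma eta alpha h r a beta v ->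
  ((a > - (alpha / 4) * r /\ incr_then_decr v) \/
   (a <= - (alpha / 4) * r /\ beta > beta2_low alpha r a /\ incr_then_decr v)) ->
  v x @[x --> +oo%R] --> -oo%R.
Proof.
move=> sg et al hp rp _ Hs [[_ Hi]|[_ [_ Hi]]]; exact: (@core R sigma eta alpha h r a beta v sg et al hp rp Hs Hi).
Qed.
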